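(* Let $\mathcal{G}$ be a $k$-uniform hypergraph. Then the following are equivalent: (1) $\mathcal{G}$ is connected; (2) $\alpha_j(\mathcal{G})>0$ for all $j\in V(\mathcal{G})$; (3) $\alpha_j(\mathcal{G})>0$ for some $j\in V(\mathcal{G})$.
   Context: A $k$-uniform hypergraph $\mathcal{G}$ has a finite vertex set $V(\mathcal{G})=[n]$ and an edge set $E(\mathcal{G})$ of $k$-element subsets of $V(\mathcal{G})$. For $\mathbf{x}\in\mathbb{R}^n$, the Laplacian form is $\mathcal{L}_\mathcal{G}\mathbf{x}^k=\sum_{\{i_1,\ldots,i_k\}\in E(\mathcal{G})}\left(x_{i_1}^k+\cdots+x_{i_k}^k-k\,x_{i_1}\cdots x_{i_k}\right)$ (this is $\mathcal{L}_\mathcal{G}=\mathcal{D}_\mathcal{G}-\mathcal{A}_\mathcal{G}$ applied to $\mathbf{x}^k$, where $\mathcal{D}_\mathcal{G}$ is the diagonal degree tensor and $\mathcal{A}_\mathcal{G}$ the adjacency tensor with entries $1/(k-1)!$ on edges). The inverse Perron value of a vertex $j$ is $\alpha_j(\mathcal{G})=\min\{\mathcal{L}_\mathcal{G}\mathbf{x}^k : \mathbf{x}\in\mathbb{R}^n_+,\ \sum_{i=1}^n x_i^k=1,\ x_j=0\}$, where $\mathbb{R}^n_+$ is the set of nonnegative vectors. A path is an alternating sequence $v_0e_1v_1\cdots e_lv_l$ of distinct vertices and distinct edges with $v_{i-1},v_i\in e_i$; $\mathcal{G}$ is connected if any two vertices are joined by a path. *)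

(* Defs.v *)
From HB Require Import structures.
From mathcomp Require Import all_boot all_order all_algebra.
From mathcomp Require Import all_classical all_reals ereal.
Set Implicit Arguments. Unset Strict Implicit. Unset Printing Implicit Defensive.
Import Order.TTheory GRing.Theory Num.Theory.
Local Open Scope ring_scope.

Definition kuniform (n k : nat) (E : {set {set 'I_n}}) : Prop :=
  forall e, e \in E -> #|e| = k.

(* A path from u to v: v_0 e_1 v_1 ... e_l v_l with distinct vertices and
   distinct edges, v_{i-1}, v_i in e_i. vs = [v_0;...;v_l], es = [e_1;...;e_l]. *)
Definition is_path (n : nat) (E : {set {set 'I_n}}) (u v : 'I_n)
    (vs : seq 'I_n) (es : seq {set 'I_n}) : Prop :=
  [/\ size vs = (size es).+1, uniq vs, uniq es & all (fun e => e \in E) es] /\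
  (forall i, (i < size es)%N ->
      nth u vs i \in nth (@finset.set0 _) es i /\ nth u vs i.+1 \in nth (@finset.set0 _) es i) /\
  nth u vs 0 = u /\ last u vs = v.

Definition hconnected (n : nat) (E : {set {set 'I_n}}) : Prop :=
  forall u v : 'I_n, exists vs es, is_path E u v vs es.

Definition lap_form (R : realType) (n k : nat) (E : {set {set 'I_n}})
    (x : 'I_n -> R) : R :=
  \sum_(e in E) (\sum_(i in e) x i ^+ k - k%:R * \prod_(i in e) x i).

Local Open Scope classical_set_scope.

(* Inverse Perron value alpha_j, as an extended real infimum (the minimum is
   attained whenever the feasible set is nonempty; it is +oo when empty). *)
Definition alpha (R : realType) (n k : nat) (E : {set {set 'I_n}}) (j : 'I_n)
    : \bar R :=
  ereal_inf [set (lap_form k E x)%:E | x in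
    [set x : 'I_n -> R | (forall i, 0 <= x i) /\
                         \sum_(i < n) x i ^+ k = 1 /\ x j = 0]].

(* Main.v *)
Require Import Defs.
From HB Require Import structures.
From mathcomp Require Import all_boot all_order all_algebra.
From mathcomp Require Import all_classical all_reals ereal.
Import Order.TTheory GRing.Theory Num.Theory.
Set Implicit Arguments. Unset Strict Implicit. Unset Printing Implicit Defensive.
From mathcomp Require Import ring lra zify.

Section Paths.
Variables (n : nat) (E : {set {set 'I_n}}).

Lemma path_nil (u : 'I_n) : is_path E u u [:: u] [::].
Proof. by split; [|split]. Qed.

Lemma path_prefix u w vs es p : is_path E u w vs es -> (p <= size es)%N ->
  is_path E u (nth u vs p) (take p.+1 vs) (take p es).
Proof.
move=> [[Hs Hu Hue Ha] [Hi [H0 Hl]]] Hp.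
have Hsv : (p.+1 <= size vs)%N by rewrite Hs.
split; [split|split; [|split]].
- by rewrite !size_takel.
- exact: take_uniq.
- exact: take_uniq.
- by apply/allP => e /mem_take He; move/allP: Ha; apply.
- move=> i; rewrite size_takel // => Hip.
  rewrite !nth_take //; last exact: ltnW.
  by apply: Hi; apply: leq_trans Hip _.
- by rewrite nth_take.
- by rewrite -nth_last size_takel // nth_take.
Qed.

Lemma path_ext u w vs es z e : is_path E u w vs es -> z \notin vs ->
  e \notin es -> e \in E -> w \in e -> z \in e ->
  is_path E u z (rcons vs z) (rcons es e).
Proof.
move=> [[Hs Hu Hue Ha] [Hi [H0 Hl]]] Hz He HE Hw Hze.
split; [split|split; [|split]].
- by rewrite !size_rcons Hs.
- by rewrite rcons_uniq Hz.
- by rewrite rcons_uniq He.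
- by rewrite all_rcons HE.
- move=> i; rewrite size_rcons ltnS leq_eqVlt => /orP [/eqP ->|Hip].
  + rewrite !nth_rcons Hs ltnn eqxx leqnn /=.
    rewrite -nth_last Hs /= in Hl; rewrite Hl ltnn eqxx; split => //.
  + rewrite !nth_rcons Hip Hs ltnS (ltnW Hip) ltnS Hip.
    exact: Hi.
- by rewrite nth_rcons Hs.
- by rewrite last_rcons.
Qed.

Definition reach (u : 'I_n) : {set 'I_n} :=
  [set w | `[< exists vs es, is_path E u w vs es >]].

Lemma reach_refl u : u \in reach u.
Proof. rewrite /reach finset.in_set; apply/asboolP; exists [:: u], [::]; exact: path_nil. Qed.

Lemma reach_closed u w z e : w \in reach u -> e \in E -> w \in e -> z \in e ->
  z \in reach u.
Proof.
rewrite /reach !finset.in_set => /asboolP [vs [es P]] HE Hw Hz; apply/asboolP.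
have [[Hs Hu Hue Ha] [Hi [H0 Hl]]] := P.
case: (boolP (z \in vs)) => Hzv.
  exists (take (index z vs).+1 vs), (take (index z vs) es).
  have Hp : (index z vs <= size es)%N by rewrite -ltnS -Hs index_mem.
  by have := path_prefix P Hp; rewrite nth_index.
case: (boolP (e \in es)) => Hee; last first.
  by exists (rcons vs z), (rcons es e); apply: path_ext P _ _ _ _ _.
set m := index e es.
have Hm : (m < size es)%N by rewrite index_mem.
exists (rcons (take m.+1 vs) z), (rcons (take m es) e).
apply: path_ext (path_prefix P (ltnW Hm)) _ _ _ _ _ => //.
- by apply: contra Hzv => /mem_take.
- apply/negP => /(nthP finset.set0) [i]; rewrite size_takel ?(ltnW Hm) // => Hi2.
  rewrite nth_take // => Hn.
  have := before_find finset.set0 Hi2; rewrite /= Hn eqxx //.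
- by have [H1 _] := Hi m Hm; rewrite nth_index in H1.
Qed.

End Paths.
Local Open Scope ring_scope.

Section Ana.
Variables (R : realType) (n k : nat) (E : {set {set 'I_n}}).
Hypothesis hk : (2 <= k)%N.
Hypothesis hE : kuniform k E.

Let k0 : (0 < k)%N. Proof. by apply: leq_trans hk. Qed.
Let kR : (0 : R) < k%:R. Proof. by rewrite ltr0n k0. Qed.

Definition fe (x : 'I_n -> R) (e : {set 'I_n}) :=
  \sum_(i in e) x i ^+ k - k%:R * \prod_(i in e) x i.

Lemma edge_ge0 (x : 'I_n -> R) (e : {set 'I_n}) : (forall i, 0 <= x i) -> #|e| = k ->
  0 <= fe x e.
Proof.
move=> x0 He; rewrite /fe subr_ge0.
have := leif_AGM (A := mem e) (E := fun i => x i ^+ k) (fun i _ => exprn_ge0 k (x0 i)).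
move=> /(fun h => h.1); rewrite He prodrXl => H.
have Hs : 0 <= \sum_(i in e) x i ^+ k by apply: sumr_ge0 => i _; exact: exprn_ge0.
have H2 : \prod_(i in e) x i <= (\sum_(i in e) x i ^+ k) / k%:R.
  rewrite -(ler_pXn2r k0) ?nnegrE //.
  - by apply: prodr_ge0 => i _.
  - by apply: divr_ge0 => //; apply: ltW.
by rewrite mulrC -ler_pdivlMr.
Qed.

Lemma fe_le_lap (x : 'I_n -> R) e : (forall i, 0 <= x i) -> e \in E ->
  fe x e <= lap_form k E x.
Proof.
move=> x0 eE; rewrite /lap_form (bigD1 e) //= -/(fe x e) lerDl.
by apply: sumr_ge0 => e' /andP [He' _]; apply: edge_ge0 => //; apply: hE.
Qed.

Definition gg (t : R) := t ^+ k / (2 * k)%:R.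
Definition cc : R := (n.+1)%:R^-1.
Definition bb m := iter m gg cc.

Lemma gg_prop t : 0 < t <= 1 -> 0 < gg t <= t.
Proof.
move=> /andP [t0 t1]; have k2 : (0 : R) < (2 * k)%:R by rewrite ltr0n muln_gt0 k0.
apply/andP; split; first by rewrite /gg divr_gt0 // exprn_gt0.
apply: le_trans (ler_iXnr k0 (ltW t0) t1).
rewrite /gg ler_pdivrMr // ler_peMr ?exprn_ge0 ?(ltW t0) //.
by rewrite ler1n muln_gt0 k0.
Qed.

Lemma bb_prop m : 0 < bb m <= 1.
Proof.
elim: m => [|m IH] /=.
  rewrite /bb /cc /= invr_gt0 ltr0n /= invf_le1 ?ltr0n //.
  by rewrite ler1n.
have /andP [h1 h2] := gg_prop IH.
by rewrite h1 /= (le_trans h2) //; case/andP: IH.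
Qed.

Lemma bb_mono m d : bb (m + d) <= bb m.
Proof.
elim: d => [|d IH]; first by rewrite addn0.
apply: le_trans IH; rewrite addnS /bb iterS.
by have /andP [] := gg_prop (bb_prop (m + d)).
Qed.


Lemma path_bound (x : 'I_n -> R) j u vs es : (forall i, 0 <= x i) ->
  (forall i, x i <= 1) -> x j = 0 -> lap_form k E x < bb n ->
  is_path E j u vs es -> x u <= cc.
Proof.
move=> x0 x1 xj Hl [[Hs Hu Hue Ha] [Hi [H0 Hlast]]].
have Hsv : (size vs <= n)%N.
  by rewrite -(card_uniqP Hu); apply: leq_trans (max_card _) _; rewrite card_ord.
have key : forall i, (i <= size es)%N -> x (nth j vs i) <= bb (n - i).
  elim=> [|i IH] Hi1.
    by rewrite H0 xj subn0; case/andP: (bb_prop n) => /ltW.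
  have Hin : (i < n)%N by lia.
  have IH' := IH (ltnW Hi1).
  set B := bb (n - i.+1).
  have HB : bb (n - i) = gg B by rewrite -(subnSK Hin) /bb iterS.
  have [Hv Hw] := Hi i Hi1.
  set e := nth finset.set0 es i in Hv Hw.
  have eE : e \in E by move/allP: Ha; apply; rewrite mem_nth.
  set v := nth j vs i in IH' Hv. set w := nth j vs i.+1 in Hw |-*.
  have h1 : x w ^+ k <= \sum_(i in e) x i ^+ k.
    by rewrite (bigD1 w) //= lerDl sumr_ge0 // => i0 _; apply: exprn_ge0.
  have h2 : \prod_(i in e) x i <= x v.
    by rewrite (bigD1 v) //= ler_piMr // prodr_ile1 // => i0 _; rewrite x0 x1.
  have h3 := fe_le_lap x0 eE.
  have h4 : bb n <= bb (n - i) by have := bb_mono (n - i) i; rewrite subnK // ltnW.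
  have /andP [Bp B1] := bb_prop (n - i.+1).
  set P := B ^+ k.
  have Pp : 0 < P by apply: exprn_gt0.
  have kg : k%:R * gg B = P / 2.
    by rewrite /gg -/P natrM; field; exact: lt0r_neq0.
  have gp : 0 <= gg B by rewrite /gg divr_ge0 // exprn_ge0 // ltW.
  have gP : gg B <= P / 2 by rewrite -kg ler_peMl // ler1n k0.
  have h5 : k%:R * \prod_(i in e) x i <= k%:R * gg B.
    by rewrite ler_wpM2l ?(ltW kR) // (le_trans h2) // -HB.
  have h6 : x w ^+ k < P.
    move: h1 h3 h4 h5 Hl; rewrite /fe HB kg; lra.
  by apply: ltW; rewrite -(ltr_pXn2r k0) ?nnegrE // ltW.
have := key _ (leqnn _); rewrite -Hlast -nth_last Hs /= => h.
by apply: le_trans h _; have := bb_mono 0 (n - size es); rewrite add0n.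
Qed.


Lemma conn_lower : hconnected E -> forall j (x : 'I_n -> R), (forall i, 0 <= x i) ->
  \sum_(i < n) x i ^+ k = 1 -> x j = 0 -> bb n <= lap_form k E x.
Proof.
move=> hc j x x0 xs xj; rewrite leNgt; apply/negP => Hl.
have x1 : forall i, x i <= 1.
  move=> i; rewrite -(expr_le1 k0 (x0 i)) -xs (bigD1 i) //= lerDl.
  by apply: sumr_ge0 => i0 _; apply: exprn_ge0.
have xc : forall i, x i <= cc.
  by move=> i; have [vs [es P]] := hc j i; apply: path_bound x0 x1 xj Hl P.
have : 1 <= \sum_(i < n) cc.
  rewrite -xs; apply: ler_sum => i _.
  exact: le_trans (ler_iXnr k0 (x0 i) (x1 i)) (xc i).
rewrite sumr_const card_ord /cc -[_ *+ n]mulr_natr ?mul1r mulrC ler_pdivlMr ?ltr0n //.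
by rewrite mul1r ler_nat ltnn.
Qed.

End Ana.

Section Disc.
Variables (R : realType) (n k : nat) (E : {set {set 'I_n}}).
Hypothesis hk : (2 <= k)%N.
Hypothesis hE : kuniform k E.

Lemma kth_root (a : R) : 0 <= a <= 1 -> exists2 r : R, 0 <= r & r ^+ k = a.
Proof.
move=> /andP [a0 a1].
have [|r /andP [r0 _] /rootP] := @poly_ivt R ('X^k - a%:P) 0 1 ler01.
  rewrite !hornerE expr0n /=.
  have -> : (k == 0%N) = false by apply/negbTE; rewrite -lt0n; apply: leq_trans hk.
  by rewrite expr1n sub0r oppr_le0 a0 subr_ge0.
by rewrite !hornerE => /eqP; rewrite subr_eq0 => /eqP H; exists r.
Qed.

Lemma disc_zero (S : {set 'I_n}) (j : 'I_n) : j \notin S -> S != finset.set0 ->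
  (forall e, e \in E -> forall a b, a \in e -> b \in e -> a \in S -> b \in S) ->
  exists x : 'I_n -> R, [/\ (forall i, 0 <= x i), \sum_(i < n) x i ^+ k = 1,
     x j = 0 & lap_form k E x = 0].
Proof.
move=> jS SN Scl.
have k0 : (0 < k)%N by apply: leq_trans hk.
have cS : (0 < #|S|)%N by rewrite card_gt0.
have [|r r0 rk] := @kth_root (#|S|%:R^-1).
  by rewrite invr_ge0 ler0n /= invf_le1 ?ltr0n // ler1n.
exists (fun i => if i \in S then r else 0); split.
- by move=> i; case: ifP.
- rewrite (eq_bigr (fun i => if i \in S then r ^+ k else 0)); last first.
    by move=> i _; case: ifP => // _; rewrite expr0n /= (gtn_eqF k0).
  rewrite -big_mkcond /= sumr_const rk -[_ *+ _]mulr_natr mulVf //.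
  by rewrite pnatr_eq0 -lt0n.
- by rewrite (negbTE jS).
- rewrite /lap_form big1 // => e eE.
  have [c Hc] : exists c, forall i, i \in e -> (if i \in S then r else 0) = c.
    case: (boolP (e \subset S)) => HeS.
      by exists r => i ie; rewrite (fintype.subsetP HeS i ie).
    exists 0 => i ie; case: ifP => // iS; exfalso; move/negP: HeS; apply.
    by apply/fintype.subsetP => b be; apply: Scl eE i b ie be iS.
  rewrite (eq_bigr (fun _ => c) Hc).
  rewrite [\sum_(i in e) _](eq_bigr (fun _ => c ^+ k)); last by move=> i ie; rewrite Hc.
  by rewrite sumr_const prodr_const (hE eE) -mulr_natl mulr1 mulr_natl subrr.
Qed.

End Disc.

Local Open Scope ereal_scope.

Lemma disc_case (R : realType) (n k : nat) (E : {set {set 'I_n}})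
    (hk : (2 <= k)%N) (hE : kuniform k E) (j : 'I_n) (S : {set 'I_n}) :
  j \notin S -> S != finset.set0 ->
  (forall e, e \in E -> forall a b, a \in e -> b \in e -> a \in S -> b \in S) ->
  (0 : \bar R) < alpha R k E j -> False.
Proof.
move=> jS SN Scl hj.
have [x [x0 xs xj xl]] := disc_zero R hk hE jS SN Scl.
have : alpha R k E j <= 0.
  apply: ge_ereal_inf; exists (lap_form k E x)%:E; last by rewrite xl.
  by exists x.
by rewrite leNgt hj.
Qed.

Theorem theorem3p1 (R : realType) (n k : nat) (E : {set {set 'I_n}})
    (hn : (0 < n)%N) (hk : (2 <= k)%N) (hE : kuniform k E) :
  [<-> hconnected E;
       forall j : 'I_n, (0 : \bar R) < alpha R k E j;
       exists j : 'I_n, (0 : \bar R) < alpha R k E j].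
Proof.
tfae => [hc j | hall | [j hj]].
- apply: (@lt_le_trans _ _ (bb R n k n)%:E).
    by rewrite lte_fin; case/andP: (bb_prop R n hk n).
  apply/ereal_infP => y [x [x0 [xs xj]] <-]; rewrite lee_fin.
  exact: (conn_lower hk hE hc x0 xs xj).
- by exists (Ordinal hn).
- case: (pselect (hconnected E)) => // hnc; exfalso.
  have [u /existsNP [v Hv]] : exists u, ~ forall v, exists vs es, is_path E u v vs es.
    by apply/existsNP.
  set C := reach E u.
  have vC : v \notin C.
    by rewrite /C /reach finset.in_set; apply/asboolP.
  case: (boolP (j \in C)) => jC.
    apply: (@disc_case R n k E hk hE j (~: C) _ _ _ hj).
    - by rewrite finset.inE jC.
    - by apply/set0Pn; exists v; rewrite finset.inE.
    - move=> e eE a b ae be; rewrite !finset.inE; apply: contra => bC.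
      have := @reach_closed n E u b a e; rewrite /reach !finset.inE; apply => //.
  apply: (@disc_case R n k E hk hE j C _ _ _ hj) => //.
  - by apply/set0Pn; exists u; apply: reach_refl.
  - by move=> e eE a b ae be aC; apply: reach_closed aC eE ae be.
Qed.
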